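(* Let $n\ge1$, $p$ a prime and $R\subsetneq E_n$. The $n$ vectors $\lambda^{(i)}_k$ ($1\le i\le h$, $1\le k\le g_i$) form a basis of $\mathbb{Q}^n$.
   Context: $E_n=\{1,\dots,n\}$, indices modulo $n$; $e_m$ ($m\in\mathbb{Z}$) the standard basis vectors of $\mathbb{Z}^n$ extended $n$-periodically. Write $E_n\setminus R=\{r_1,\dots,r_h\}$ ($h\ge1$) so that $r_{i+1}$ is the first element of $E_n\setminus R$ in the cyclic sequence $r_i+1,r_i+2,\dots$ (with $r_{h+1}=r_1$, $r_0=r_h$); let $g_i$ be the smallest positive integer with $r_{i-1}+g_i\equiv r_i\pmod n$. Define $\lambda^{(i)}_k=e_{r_i}+p^ke_{r_i-k}$ for $1\le k\le g_i-1$ and $\lambda^{(i)}_{g_i}=e_{r_i}-p^{g_i}e_{r_{i-1}}$. *)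

(* Defs.v *)
From HB Require Import structures.
From mathcomp Require Import all_boot all_order all_algebra.
Set Implicit Arguments. Unset Strict Implicit. Unset Printing Implicit Defensive.
Import Order.TTheory GRing.Theory Num.Theory.
Local Open Scope ring_scope.

(* Convention: E_n = {1,...,n} is represented by 'I_n = {0,...,n-1} via
   j <-> j+1; all indices are taken modulo n. *)

Definition evec (n m : nat) : 'rV[rat]_n :=
  \row_(j < n) ((nat_of_ord j == m %% n)%N%:R).

(* E_n \ R, listed in increasing order: r_1 < ... < r_h; then r_{i+1} is the
   first element of E_n \ R in the cyclic sequence r_i+1, r_i+2, ...  *)
Definition compl_seq (n : nat) (R : {set 'I_n}) : seq nat :=
  [seq nat_of_ord x | x <- enum 'I_n & x \notin R].

Definition hh (n : nat) (R : {set 'I_n}) : nat := size (compl_seq R).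

(* r i for i = 0..h-1 (0-based: r 0 = r_1, ..., r (h-1) = r_h) *)
Definition rr (n : nat) (R : {set 'I_n}) (i : nat) : nat :=
  nth 0%N (compl_seq R) i.

(* r_{i-1}, cyclically (r_0 = r_h) *)
Definition rprev (n : nat) (R : {set 'I_n}) (i : nat) : nat :=
  rr R ((i + hh R).-1 %% hh R).

(* g_i : smallest positive integer with r_{i-1} + g_i = r_i (mod n) *)
Definition gg (n : nat) (R : {set 'I_n}) (i : nat) : nat :=
  let d := ((rr R i + n - rprev R i) %% n)%N in
  if d == 0%N then n else d.

Definition lam (n p : nat) (R : {set 'I_n}) (i k : nat) : 'rV[rat]_n :=
  if (k < gg R i)%N then
    evec n (rr R i) + ((p ^ k)%N)%:R *: evec n (rr R i + n - k)
  else
    evec n (rr R i) - ((p ^ gg R i)%N)%:R *: evec n (rprev R i).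

Definition lam_family (n p : nat) (R : {set 'I_n}) : seq 'rV[rat]_n :=
  flatten [seq [seq lam p R i k | k <- iota 1 (gg R i)] | i <- iota 0 (hh R)].

(* Main.v *)
Require Import Defs.
From HB Require Import structures.
From mathcomp Require Import all_boot all_order all_algebra.
From mathcomp Require Import zify.
Import Order.TTheory GRing.Theory Num.Theory.
Set Warnings "-notation-overridden,-ambiguous-paths".
Set Implicit Arguments. Unset Strict Implicit.

Lemma cs_sorted n (R : {set 'I_n}) : sorted ltn (compl_seq R).
Proof.
rewrite /compl_seq sorted_map; apply: sorted_filter.
  by move=> a b c /=; apply: ltn_trans.
by rewrite -sorted_map val_enum_ord iota_ltn_sorted.
Qed.

Lemma cs_lt n (R : {set 'I_n}) x : x \in compl_seq R -> (x < n)%N.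
Proof. by case/mapP=> y _ ->. Qed.

Lemma cs_mem n (R : {set 'I_n}) (j : 'I_n) : (val j \in compl_seq R) = (j \notin R).
Proof.
rewrite /compl_seq mem_map; last exact: val_inj.
by rewrite mem_filter mem_enum andbT.
Qed.

Lemma hh_gt0 n (R : {set 'I_n}) : R != setT -> (0 < hh R)%N.
Proof.
move=> HR; have [j Hj] : exists j, j \notin R.
  apply/existsP; apply: contraR HR => /existsPn H; apply/eqP/setP => x.
  by rewrite inE; move: (H x); rewrite negbK.
by rewrite /hh -has_predT; apply/hasP; exists (val j); rewrite ?cs_mem.
Qed.

Lemma rr_lt n (R : {set 'I_n}) i : (i < hh R)%N -> (rr R i < n)%N.
Proof. by move=> H; apply: cs_lt; apply: mem_nth. Qed.

Lemma rr_mono n (R : {set 'I_n}) i j : (i < j)%N -> (j < hh R)%N -> (rr R i < rr R j)%N.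
Proof.
move=> Hij Hj; apply: (sorted_ltn_nth ltn_trans) => //; first exact: cs_sorted.
  by rewrite inE; apply: ltn_trans Hj.
Qed.

Lemma rprev_0 n (R : {set 'I_n}) : (0 < hh R)%N -> rprev R 0 = rr R (hh R).-1.
Proof. by move=> H; rewrite /rprev add0n modn_small // prednK. Qed.

Lemma rprev_S n (R : {set 'I_n}) i : (0 < i < hh R)%N -> rprev R i = rr R i.-1.
Proof.
case/andP=> H0 H; rewrite /rprev -subn1 -addnBAC // subn1 -modnDmr modnn addn0 modn_small //.
lia.
Qed.

Lemma gg_0 n (R : {set 'I_n}) : (0 < hh R)%N -> gg R 0 = (rr R 0 + n - rr R (hh R).-1)%N.
Proof.
move=> H; rewrite /gg rprev_0 //.
have H1 : (rr R (hh R).-1 < n)%N by apply: rr_lt; rewrite prednK.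
have H0 := rr_lt H.
case E: (hh R) => [|[|h]]; rewrite E in H H1 *; first by [].
  by rewrite /= addKn modnn.
have Hm : (rr R 0 < rr R h.+1)%N by apply: rr_mono; rewrite ?E.
rewrite modn_small /=; last lia.
simpl in H1; by case: eqP => //; lia.
Qed.

Lemma gg_S n (R : {set 'I_n}) i : (0 < i < hh R)%N -> gg R i = (rr R i - rr R i.-1)%N.
Proof.
move=> Hi; rewrite /gg rprev_S //; case/andP: Hi => H0 H.
have H1 := rr_lt H.
have Hm : (rr R i.-1 < rr R i)%N by apply: rr_mono => //; lia.
have -> : (rr R i + n - rr R i.-1 = (rr R i - rr R i.-1) + n)%N by lia.
rewrite modnDr modn_small; last lia.
by case: eqP => //; lia.
Qed.

Lemma gg_sum n (R : {set 'I_n}) m : (m < hh R)%N ->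
  (\sum_(0 <= i < m.+1) gg R i = rr R m + n - rr R (hh R).-1)%N.
Proof.
elim: m => [|m IH] Hm.
  by rewrite big_nat1 gg_0 //; lia.
rewrite big_nat_recr //= IH; last lia.
rewrite gg_S; last lia.
have H1 : (rr R (hh R).-1 < n)%N by apply: rr_lt; lia.
have H2 : (rr R m < rr R m.+1)%N by apply: rr_mono.
have H3 : (rr R m.+1 <= rr R (hh R).-1)%N.
  case: (ltngtP m.+1 (hh R).-1) => [h|h|->] //; first by apply/ltnW/rr_mono => //; lia.
  lia.
simpl; lia.
Qed.

Lemma size_lam n p (R : {set 'I_n}) : R != setT -> size (lam_family p R) = n.
Proof.
move=> HR; have H := hh_gt0 HR.
rewrite /lam_family size_flatten /shape -map_comp.
rewrite (eq_map (g := gg R)); last by move=> i /=; rewrite size_map size_iota.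
rewrite sumnE big_map -(prednK H) gg_sum ?prednK //.
have H1 : (rr R (hh R).-1 < n)%N by apply: rr_lt; lia.
lia.
Qed.

Local Open Scope ring_scope.

Lemma evec_mod n a b : (a %% n = b %% n)%N -> evec n a = evec n b.
Proof. by move=> H; rewrite /evec H. Qed.

Lemma lam_in n p (R : {set 'I_n}) i k : (i < hh R)%N -> (0 < k <= gg R i)%N ->
  lam p R i k \in <<lam_family p R>>%VS.
Proof.
move=> Hi Hk; apply: memv_span; apply/flattenP.
exists [seq lam p R i k | k <- iota 1 (gg R i)].
  by apply/mapP; exists i => //; rewrite mem_iota.
by apply: map_f; rewrite mem_iota; lia.
Qed.

Lemma w_chain n p (R : {set 'I_n}) i : R != setT -> (i < hh R)%N ->
  evec n (rr R i) - ((p ^ (rr R i + n - rr R (hh R).-1))%N)%:R *: evec n (rr R (hh R).-1)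
  \in <<lam_family p R>>%VS.
Proof.
move=> HR; have H := hh_gt0 HR.
elim: i => [|i IH] Hi.
  have := lam_in p (k := gg R 0) H; rewrite /lam ltnn gg_0 // rprev_0 //.
  apply; rewrite -gg_0 // gg_0 //.
  have H1 : (rr R (hh R).-1 < n)%N by apply: rr_lt; lia.
  have H0 : (rr R 0 < n)%N by apply: rr_lt; lia.
  lia.
have Hg : (0 < gg R i.+1)%N.
  rewrite gg_S //=; have := @rr_mono n R i i.+1 (ltnSn _) Hi; lia.
have L' : lam p R i.+1 (gg R i.+1) \in <<lam_family p R>>%VS.
  by apply: lam_in => //; rewrite Hg leqnn.
move: L'; rewrite /lam ltnn rprev_S //= => L'.
have := memvD L' (memvZ ((p ^ gg R i.+1)%N)%:R (IH (ltnW Hi))).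
rewrite scalerBr addrA subrK scalerA -natrM -expnD.
have H1 : (rr R (hh R).-1 < n)%N by apply: rr_lt; lia.
have -> // : (gg R i.+1 + (rr R i + n - rr R (hh R).-1) = rr R i.+1 + n - rr R (hh R).-1)%N.
rewrite gg_S //=; have := @rr_mono n R i i.+1 (ltnSn _) Hi; lia.
Qed.

Lemma w_in n p (R : {set 'I_n}) i : (0 < n)%N -> prime p -> R != setT -> (i < hh R)%N ->
  evec n (rr R i) \in <<lam_family p R>>%VS.
Proof.
move=> Hn Hp HR Hi; have H := hh_gt0 HR.
set L := rr R (hh R).-1.
have HL : (L < n)%N by apply: rr_lt; lia.
have HLin : evec n L \in <<lam_family p R>>%VS.
  have Hh : ((hh R).-1 < hh R)%N by lia.
  have := w_chain p HR Hh; rewrite -/L.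
  have -> : (L + n - L = n)%N by lia.
  set c := ((p ^ n)%N)%:R : rat.
  have Hc : 1 - c != 0.
    rewrite subr_eq0 eq_sym /c pnatr_eq1 -(expn0 p).
    rewrite eqn_exp2l; first by lia.
    exact: prime_gt1.
  rewrite -{1}(scale1r (evec n L)) -scalerBl => /(memvZ (1 - c)^-1).
  by rewrite scalerA mulVf // scale1r.
have := memvD (w_chain p HR Hi) (memvZ ((p ^ (rr R i + n - L))%N)%:R HLin).
by rewrite subrK.
Qed.

Lemma gap_in n p (R : {set 'I_n}) i k j : (0 < n)%N -> prime p -> R != setT ->
  (i < hh R)%N -> (0 < k < gg R i)%N -> ((rr R i + n - k) %% n = j %% n)%N ->
  evec n j \in <<lam_family p R>>%VS.
Proof.
move=> Hn Hp HR Hi Hk Hj.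
have L : lam p R i k \in <<lam_family p R>>%VS.
  by apply: lam_in => //; lia.
move: L; rewrite /lam; case/andP: Hk => _ -> /memvB /(_ (w_in Hn Hp HR Hi)).
rewrite addrC addKr (evec_mod Hj) => /(memvZ ((p ^ k)%N)%:R^-1).
rewrite scalerA mulVf ?scale1r //.
rewrite pnatr_eq0 expn_eq0; have := prime_gt0 Hp; lia.
Qed.

Lemma evec_in n p (R : {set 'I_n}) (j : 'I_n) : (0 < n)%N -> prime p -> R != setT ->
  evec n j \in <<lam_family p R>>%VS.
Proof.
move=> Hn Hp HR; have H := hh_gt0 HR.
have Hj : (val j < n)%N := ltn_ord j.
case: (boolP (j \in R)) => jR; last first.
  rewrite -cs_mem in jR.
  rewrite -(nth_index 0%N jR); apply: (w_in (i := index (val j) (compl_seq R))) => //.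
  by rewrite /hh index_mem.
have jN : val j \notin compl_seq R by rewrite cs_mem jR.
set L := rr R (hh R).-1.
have HL : (L < n)%N by apply: rr_lt; lia.
have HL0 : (rr R 0 < n)%N by apply: rr_lt; lia.
have HL0L : (rr R 0 <= L)%N.
  rewrite /L; case: (posnP (hh R).-1) => [->|h0] //; apply/ltnW/rr_mono => //; lia.
set i0 := find (fun r => val j < r)%N (compl_seq R).
have Hi0 : (i0 <= hh R)%N by apply: find_size.
have Hbf : forall k, (k < i0)%N -> ~~ (val j < rr R k)%N.
  by move=> k hk; apply/negbT; apply: (@before_find _ 0%N (fun r => val j < r)%N).
have Hnf : (i0 < hh R)%N -> (val j < rr R i0)%N.
  by move=> hk; apply: (@nth_find _ 0%N (fun r => val j < r)%N); rewrite has_find.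
clearbody i0.
case: (ltngtP i0 0) => // [h0|h0].
  case: (ltngtP i0 (hh R)) => [h1|h1|h1]; [|lia|].
    have A1 := Hnf h1.
    have A2 : ~~ (val j < rr R i0.-1)%N by apply: Hbf; lia.
    have A3 : rr R i0.-1 != val j.
      by apply: contraNneq jN => <-; apply: mem_nth; rewrite /hh in h1; exact: leq_ltn_trans (leq_pred _) h1.
    apply: (@gap_in _ p R i0 (rr R i0 - val j)) => //.
      rewrite gg_S; last lia.
      have := rr_lt h1; lia.
    have -> : (rr R i0 + n - (rr R i0 - val j) = val j + n)%N by have := rr_lt h1; lia.
    by rewrite modnDr.
  (* i0 = h : all r <= j *)
  have A2 : ~~ (val j < L)%N.
    by apply: Hbf; lia.
  have A3 : L != val j.
    have Hh : ((hh R).-1 < hh R)%N by lia.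
    by apply: contraNneq jN => <-; apply: mem_nth; exact: Hh.
  apply: (@gap_in _ p R 0 (rr R 0 + n - val j)) => //.
    by rewrite gg_0 // -/L; lia.
  have -> : (rr R 0 + n - (rr R 0 + n - val j) = val j)%N by lia.
  by [].
have A1 : (val j < rr R 0)%N.
  by rewrite -h0; apply: Hnf; rewrite h0.
apply: (@gap_in _ p R 0 (rr R 0 - val j)) => //.
  by rewrite gg_0 // -/L; lia.
have -> : (rr R 0 + n - (rr R 0 - val j) = val j + n)%N by lia.
by rewrite modnDr.
Qed.

Lemma row_decomp n (v : 'rV[rat]_n) : v = \sum_(j < n) v 0 j *: evec n j.
Proof.
apply/rowP => k; rewrite summxE (bigD1 k) //= big1 ?addr0.
  by rewrite !mxE modn_small // eqxx mulr1.
move=> i ik; rewrite !mxE modn_small //.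
by case: eqP => [/val_inj /eqP| _]; rewrite ?mulr0 // eq_sym (negbTE ik).
Qed.

Theorem mainTheorem6 (n p : nat) (R : {set 'I_n}) :
  (0 < n)%N -> prime p -> R != [set: 'I_n] ->
  size (lam_family p R) = n /\
  basis_of (fullv : {vspace 'rV[rat]_n}) (lam_family p R).
Proof.
move=> Hn Hp HR; split; first exact: size_lam.
rewrite basisEdim size_lam // dimvf /dim /= mul1n leqnn andbT.
apply/subvP => v _; rewrite (row_decomp v).
by apply: memv_suml => j _; apply: memvZ; apply: evec_in.
Qed.
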